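(* Let $\mathcal{F}\subset K[x_1,\ldots,x_n]$ be a chordal polynomial set with $x_1<\cdots<x_n$ as a perfect elimination ordering. Then every node $(\mathcal{P},\mathcal{Q},i)$ of the Wang decomposition tree $\mathcal{N}(\mathcal{F})$ satisfies $G(\mathcal{P})\subseteq G(\mathcal{F})$.
   Context: Let $K$ be a field and $K[x_1,\ldots,x_n]$ the polynomial ring, with the variables ordered $x_1<\cdots<x_n$. For a polynomial $F$, $\mathrm{supp}(F)$ is the set of variables effectively appearing in $F$. For a set of polynomials $\mathcal{P}$, $\mathrm{supp}(\mathcal{P})=\bigcup_{F\in\mathcal{P}}\mathrm{supp}(F)$. For a nonconstant $F$, $\mathrm{lv}(F)$ is the greatest variable in $\mathrm{supp}(F)$. For a polynomial set $\mathcal{P}$ and $1\le i\le n$, $\mathcal{P}^{(i)}=\{P\in\mathcal{P}:\mathrm{lv}(P)=x_i\}$; constants belong to no $\mathcal{P}^{(i)}$. The associated graph $G(\mathcal{P})$ is the undirected graph whose vertex set is $\mathrm{supp}(\mathcal{P})$, with an edge between distinct $x_i,x_j$ iff some $F\in\mathcal{P}$ has $x_i,x_j\in\mathrm{supp}(F)$. For graphs, $G\subseteq G'$ means that $G$ is a subgraph of $G'$, i.e. both the vertex set and the edge set are contained. An ordering of the vertices of a graph is a perfect elimination ordering if, for every vertex $v$, the set consisting of $v$ and all neighbours of $v$ smaller than $v$ is a clique. A polynomial set $\mathcal{P}$ is called chordal with $x_1<\cdots<x_n$ as a perfect elimination ordering if the restriction of this ordering to $\mathrm{supp}(\mathcal{P})$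 is a perfect elimination ordering of $G(\mathcal{P})$. For a nonconstant polynomial $F$ with $\mathrm{lv}(F)=x_k$, write $F=I x_k^d+R$ with $d=\deg(F,x_k)$, $I\in K[x_1,\ldots,x_{k-1}]$, and $\deg(R,x_k)<d$. Then $\mathrm{ini}(F)=I$ is the initial of $F$ and $\mathrm{tail}(F)=R$ is the tail of $F$. For $\mathrm{lv}(T)=x_i$, $\mathrm{prem}(P,T)$ is the pseudo-remainder of $P$ by $T$ with respect to $x_i$. The zero polynomial has empty support. Wang's decomposition tree: $\mathcal{N}(\mathcal{F})$ is the smallest set of triples $(\mathcal{P},\mathcal{Q},i)$, where $\mathcal{P},\mathcal{Q}$ are polynomial sets and $0\le i\le n$, satisfying the following: - $(\mathcal{F},\emptyset,n)\in\mathcal{N}(\mathcal{F})$. - If $(\mathcal{P},\mathcal{Q},i)\in\mathcal{N}(\mathcal{F})$ with $i\ge1$ and $\#\mathcal{P}^{(i)}>1$, then for every $T\in\mathcal{P}^{(i)}$ of minimal degree in $x_i$ among the elements of $\mathcal{P}^{(i)}$, both of the following triples belong to $\mathcal{N}(\mathcal{F})$: - the left child $\big((\mathcal{P}\setminus\mathcal{P}^{(i)})\cup\{T\}\cup\{\mathrm{prem}(P,T):P\in\mathcal{P}^{(i)}\},\ \mathcal{Q}\cup\{\mathrm{ini}(T)\},\ i\big)$; - the right child $\big((\mathcal{P}\setminus\{T\})\cup\{\mathrm{ini}(T),\mathrm{tail}(T)\},\ \mathcal{Q},\ i\big)$. - If $(\mathcal{P},\mathcal{Q},i)\in\mathcal{N}(\mathcal{F})$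 with $i\ge1$ and $\#\mathcal{P}^{(i)}\le1$, then $(\mathcal{P},\mathcal{Q},i-1)\in\mathcal{N}(\mathcal{F})$. This set contains all triples occurring in Wang's method for triangular decomposition applied to $\mathcal{F}$. *)

(* Defs.v *)
(* Multivariate polynomials K[x_1,...,x_n] are modelled as
   iterated univariate polynomials: MP K 0 = K and MP K (n+1) = (MP K n)[x_{n+1}],
   so that x_{n+1} is the outermost variable. Variables are indexed by
   naturals 1..n (x_i <-> index i). *)
From HB Require Import structures.
From mathcomp Require Import all_boot all_order all_algebra.
Set Implicit Arguments. Unset Strict Implicit. Unset Printing Implicit Defensive.
Import GRing.Theory.
Local Open Scope ring_scope.

Fixpoint MP (K : idomainType) (n : nat) : idomainType :=
  match n with
  | 0 => K
  | n'.+1 => ({poly MP K n'} : idomainType)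
  end.

(* degree of P in the variable x_i (0 if x_i does not occur, or P = 0) *)
Fixpoint deg_in (K : idomainType) (n : nat) : nat -> MP K n -> nat :=
  match n return nat -> MP K n -> nat with
  | 0 => fun _ _ => 0%N
  | n'.+1 => fun i (P : {poly MP K n'}) =>
      if i == n'.+1 then (size P).-1
      else (\max_(j < size P) deg_in i P`_j)%N
  end.

(* coefficient of x_i^e in P, P viewed as a polynomial in x_i whose
   coefficients are polynomials in the other variables *)
Fixpoint coef_at (K : idomainType) (n : nat) : nat -> nat -> MP K n -> MP K n :=
  match n return nat -> nat -> MP K n -> MP K n with
  | 0 => fun _ e P => if e == 0%N then P else 0
  | n'.+1 => fun i e (P : {poly MP K n'}) =>
      if i == n'.+1 then (P`_e)%:P
      else map_poly (coef_at i e) P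
  end.

(* the variable x_i (meaningful for 1 <= i <= n) *)
Fixpoint var (K : idomainType) (n : nat) : nat -> MP K n :=
  match n return nat -> MP K n with
  | 0 => fun _ => 1
  | n'.+1 => fun i => if i == n'.+1 then ('X : {poly MP K n'}) else (var K n' i)%:P
  end.

Section Ops.
Variables (K : idomainType) (n : nat).
Implicit Types (P T F : MP K n).

Definition occurs (i : nat) P : bool := (0 < deg_in i P)%N.

(* leading variable: index of the greatest variable in supp(P); 0 iff P constant *)
Definition lv P : nat := (\max_(i < n.+1 | occurs i P) i)%N.

Definition ini F : MP K n := coef_at (lv F) (deg_in (lv F) F) F.
Definition tail F : MP K n := F - ini F * var K n (lv F) ^+ deg_in (lv F) F.

(* pseudo-remainder of P by T w.r.t. x_i, i = lv T (Knuth's algorithm with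
   exactly s = max(deg(P,x_i) - deg(T,x_i) + 1, 0) multiplications by ini T) *)
Fixpoint prem_aux (T : MP K n) (i d j : nat) (r : MP K n) : MP K n :=
  match j with
  | 0 => r
  | j'.+1 => prem_aux T i d j'
               (ini T * r - coef_at i (d + j') r * var K n i ^+ j' * T)
  end.

Definition prem P T : MP K n :=
  let i := lv T in let d := deg_in i T in
  if (deg_in i P < d)%N then P else prem_aux T i d (deg_in i P - d).+1 P.

Definition pset := MP K n -> Prop.

Definition gvert (S : pset) (v : nat) : Prop := exists F, S F /\ occurs v F.
Definition gadj (S : pset) (u v : nat) : Prop :=
  u <> v /\ exists F, S F /\ occurs u F /\ occurs v F.

Definition subgraph (S1 S2 : pset) : Prop :=
  (forall v, gvert S1 v -> gvert S2 v) /\ (forall u v, gadj S1 u v -> gadj S2 u v).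

(* x_1 < ... < x_n (restricted to supp S) is a perfect elimination ordering of G(S) *)
Definition chordal_peo (S : pset) : Prop :=
  forall v, gvert S v ->
    forall u w, (u = v \/ (gadj S u v /\ (u < v)%N)) ->
                (w = v \/ (gadj S w v /\ (w < v)%N)) -> u <> w -> gadj S u w.

Definition pset_finite (S : pset) : Prop := exists s : seq (MP K n), forall p, S p <-> p \in s.

Definition level (S : pset) (i : nat) : pset := fun p => S p /\ lv p = i.

Definition card_gt1 (S : pset) : Prop := exists p q, S p /\ S q /\ p <> q.

Definition left_set (S : pset) (i : nat) (T : MP K n) : pset :=
  fun p => (S p /\ lv p <> i) \/ p = T \/ exists p', level S i p' /\ p = prem p' T.
Definition right_set (S : pset) (T : MP K n) : pset :=
  fun p => (S p /\ p <> T) \/ p = ini T \/ p = tail T.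

Inductive wang_node (F : pset) : pset -> pset -> nat -> Prop :=
| WRoot : wang_node F F (fun _ => False) n
| WLeft (P Q : pset) (i : nat) (T : MP K n) :
    wang_node F P Q i -> (1 <= i)%N -> card_gt1 (level P i) -> level P i T ->
    (forall p, level P i p -> (deg_in i T <= deg_in i p)%N) ->
    wang_node F (left_set P i T) (fun q => Q q \/ q = ini T) i
| WRight (P Q : pset) (i : nat) (T : MP K n) :
    wang_node F P Q i -> (1 <= i)%N -> card_gt1 (level P i) -> level P i T ->
    (forall p, level P i p -> (deg_in i T <= deg_in i p)%N) ->
    wang_node F (right_set P T) Q i
| WDown (P Q : pset) (i : nat) :
    wang_node F P Q i.+1 -> ~ card_gt1 (level P i.+1) -> wang_node F P Q i.
End Ops.

(* Main.v *)
Require Import Defs.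
From HB Require Import structures.
From mathcomp Require Import all_boot all_order all_algebra.
Set Implicit Arguments. Unset Strict Implicit. Unset Printing Implicit Defensive.
Import GRing.Theory.

Section Aux.
Variable K : idomainType.
Local Open Scope ring_scope.

Definition fr n i (p : MP K n) := deg_in i p = 0%N.

Lemma deg_in0 n i : deg_in i (0 : MP K n) = 0%N.
Proof. case: n => [|n] //=; case: ifP => _; rewrite polyseq0 //= big_ord0 //. Qed.

Lemma max_eq0 (m : nat) (f : 'I_m -> nat) :
  (\max_(j < m) f j = 0)%N <-> forall j, f j = 0%N.
Proof.
split => H.
  move=> j; apply/eqP; rewrite -leqn0 -H; exact: leq_bigmax.
apply/eqP; rewrite -leqn0; apply/bigmax_leqP => j _; by rewrite H.
Qed.

Lemma free_poly n i (p : {poly MP K n}) : i != n.+1 ->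
  (@deg_in K n.+1 i p = 0%N <-> forall k, deg_in i p`_k = 0%N).
Proof.
move=> Hi /=; rewrite (negbTE Hi); split => H.
  move=> k; case: (ltnP k (size p)) => Hk; first exact: ((iffLR (max_eq0 _)) H (Ordinal Hk)).
  by rewrite nth_default // deg_in0.
by apply/max_eq0 => j; apply: H.
Qed.

Lemma free_top n (p : {poly MP K n}) :
  (@deg_in K n.+1 n.+1 p = 0%N <-> (size p <= 1)%N).
Proof. rewrite /= eqxx; by case: (size p) => [|[|]]. Qed.

Lemma coef_at0 n j e : coef_at j e (0 : MP K n) = 0.
Proof.
case: n => [|n] /=; first by case: eqP.
case: ifP => _; by rewrite ?coef0 ?polyC0 ?map_poly0.
Qed.

Lemma fr0 n i : fr i (0 : MP K n). Proof. exact: deg_in0. Qed.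

Lemma fr1 n i : fr i (1 : MP K n).
Proof.
elim: n => [|n IH] //; rewrite /fr.
case: (eqVneq i n.+1) => [->|Hi].
  by apply/free_top; rewrite size_poly1.
apply/free_poly => // k; rewrite coef1; case: (k == 0)%N; [exact: IH|exact: deg_in0].
Qed.

Lemma frD n i (p q : MP K n) : fr i p -> fr i q -> fr i (p + q).
Proof.
elim: n p q => [|n IH] p q //; rewrite /fr.
case: (eqVneq i n.+1) => [->|Hi].
  move=> /free_top Hp /free_top Hq; apply/free_top.
  apply: leq_trans (size_add _ _) _; by rewrite geq_max Hp Hq.
move=> /(free_poly _ Hi) Hp /(free_poly _ Hi) Hq; apply/free_poly => // k.
rewrite coefD; exact: IH.
Qed.

Lemma frN n i (p : MP K n) : fr i p -> fr i (- p).
Proof.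
elim: n p => [|n IH] p //; rewrite /fr.
case: (eqVneq i n.+1) => [->|Hi].
  move=> /free_top Hp; apply/free_top; by rewrite size_polyN.
move=> /(free_poly _ Hi) Hp; apply/free_poly => // k.
rewrite coefN; exact: IH.
Qed.

Lemma frM n i (p q : MP K n) : fr i p -> fr i q -> fr i (p * q).
Proof.
elim: n p q => [|n IH] p q //; rewrite /fr.
case: (eqVneq i n.+1) => [->|Hi].
  move=> /free_top Hp /free_top Hq; apply/free_top.
  apply: leq_trans (size_polyMleq _ _) _.
  move: Hp Hq; case: (size p) => [|[|]] //; case: (size q) => [|[|]] //.
move=> /(free_poly _ Hi) Hp /(free_poly _ Hi) Hq; apply/free_poly => // k.
rewrite coefM; apply: (big_ind (fr i)); [exact: fr0|exact: frD|].
move=> j _; exact: IH.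
Qed.

Lemma frX n i (p : MP K n) k : fr i p -> fr i (p ^+ k).
Proof.
move=> Hp; elim: k => [|k IH]; first by rewrite expr0; exact: fr1.
rewrite exprS; exact: frM.
Qed.

Lemma frvar n i j : i != j -> fr i (var K n j).
Proof.
move=> Hij; elim: n => [|n IH] //; rewrite /fr.
case: (eqVneq i n.+1) => [Ei|Hi].
  subst i; apply/free_top => /=; case: ifP => [/eqP Ej|_].
    by rewrite Ej eqxx in Hij.
  by rewrite size_polyC; case: (_ != _).
apply/(free_poly _ Hi) => k /=; case: ifP => Hj.
  rewrite coefX.
  case: (k == 1)%N; [exact: fr1|exact: fr0].
rewrite coefC.
case: (k == 0)%N; [exact: IH|exact: fr0].
Qed.

Lemma frcoef n i j e (p : MP K n) : fr i p -> fr i (coef_at j e p).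
Proof.
elim: n p => [|n IH] p //; rewrite /fr.
case: (eqVneq i n.+1) => [->|Hi].
  move=> /free_top Hp; apply/free_top => /=.
  case: ifP => _; first by rewrite size_polyC; case: (_ != _).
  rewrite /map_poly; apply: leq_trans (size_poly _ _) Hp.
move=> Hp; have Hp' := (iffLR (free_poly _ Hi) Hp).
apply/free_poly => // k /=.
case: ifP => _.
  rewrite coefC; case: (k == 0)%N; [exact: Hp'|exact: deg_in0].
rewrite coef_map_id0; last exact: coef_at0.
exact: IH.
Qed.

Lemma deg_out n j (p : MP K n) : (j == 0)%N || (n < j)%N -> deg_in j p = 0%N.
Proof.
elim: n p => [|n IH] p // Hj.
have Hn : j != n.+1.
  by case/orP: Hj => [/eqP ->//|H]; rewrite neq_ltn H orbT.
apply/(free_poly _ Hn) => k; apply: IH.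
case/orP: Hj => [->//|H]; by rewrite (ltnW H) orbT.
Qed.

Lemma occ_fr n j (p : MP K n) : ~~ occurs j p -> fr j p.
Proof. by rewrite /occurs lt0n negbK => /eqP. Qed.

Lemma fr_occ n j (p : MP K n) : fr j p -> ~~ occurs j p.
Proof. by rewrite /occurs /fr => ->. Qed.

Lemma lv_ge n j (p : MP K n) : occurs j p -> (j <= lv p)%N.
Proof.
move=> Hj.
have Hjn : (j < n.+1)%N.
  rewrite ltnS leqNgt; apply/negP => H.
  by move: Hj; rewrite /occurs deg_out ?H ?orbT.
exact: (@leq_bigmax_cond _ (fun i : 'I_n.+1 => occurs i p) (fun i => nat_of_ord i) (Ordinal Hjn)).
Qed.

Lemma lv_occ n (p : MP K n) : (0 < lv p)%N -> occurs (lv p) p.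
Proof.
have : (lv p == 0)%N || occurs (lv p) p.
  rewrite /lv; apply: (big_ind (fun x => (x == 0)%N || occurs x p)) => //.
  move=> x y Hx Hy; rewrite /maxn; by case: ifP.
  by move=> k ->; rewrite orbT.
by case/orP => [/eqP->|].
Qed.

Lemma ini_fr n j (T : MP K n) : fr j T -> fr j (ini T).
Proof. exact: frcoef. Qed.

Lemma tail_fr n j (T : MP K n) : fr j T -> fr j (tail T).
Proof.
move=> HT; rewrite /tail; apply: frD => //; apply: frN; apply: frM.
  exact: ini_fr.
case: (eqVneq j (lv T)) => [E|H].
  by rewrite -E HT expr0; exact: fr1.
by apply: frX; apply: frvar.
Qed.

Lemma prem_fr n j (P T : MP K n) : j != lv T -> fr j P -> fr j T -> fr j (prem P T).
Proof.
move=> Hj HP HT; rewrite /prem; case: ifP => _ //.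
move: (_ - _)%N.+1 => k; elim: k P HP => [|k IH] r Hr //=.
apply: IH; apply: frD; [apply: frM => //; exact: ini_fr|].
apply: frN; apply: frM => //; apply: frM; [exact: frcoef|].
by apply: frX; apply: frvar.
Qed.

Lemma ini_supp n j (T : MP K n) : occurs j (ini T) -> occurs j T.
Proof. move=> H; apply/negPn/negP => /occ_fr /ini_fr /fr_occ; by rewrite H. Qed.

Lemma tail_supp n j (T : MP K n) : occurs j (tail T) -> occurs j T.
Proof. move=> H; apply/negPn/negP => /occ_fr /tail_fr /fr_occ; by rewrite H. Qed.

Lemma prem_supp n j (P T : MP K n) : occurs j (prem P T) -> occurs j P \/ occurs j T.
Proof.
move=> H; case: (eqVneq j (lv T)) => [E|Hj].
  right; rewrite E; apply: lv_occ; rewrite -E lt0n; apply/negP => /eqP E0.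
  by move: H; rewrite /occurs deg_out ?E0.
case: (boolP (occurs j P)) => HP; first by left.
case: (boolP (occurs j T)) => HT; first by right.
have := fr_occ (prem_fr Hj (occ_fr HP) (occ_fr HT)); by rewrite H.
Qed.

End Aux.

Theorem theorem4p3 (K : fieldType) (n : nat) (F : pset K n)
  (Ffin : pset_finite F) (Fch : chordal_peo F) :
  forall (P Q : pset K n) (i : nat), wang_node F P Q i -> subgraph P F.
Proof.
have gsym : forall (S : pset K n) u v, gadj S u v -> gadj S v u.
  move=> S u v [Huv [p [Sp [Hu Hv]]]]; split; first by auto.
  by exists p.
move=> P Q i H; elim: H => {P Q i}.
- by split.
- move=> P Q i T _ [IHv IHe] Hi _ [PT lvT] _; split.
    move=> v [p [Hp occ]]; case: Hp => [[Pp _]|[E|[p' [[Pp' _] E]]]].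
    + by apply: IHv; exists p.
    + by apply: IHv; exists T; split; last rewrite -E.
    + rewrite E in occ; case: (prem_supp occ) => o; apply: IHv; by [exists p'|exists T].
  move=> u v [nuv [p [Hp [ou ov]]]].
  case: Hp => [[Pp _]|[E|[p' [[Pp' lvp'] E]]]].
  + by apply: IHe; split => //; exists p.
  + by apply: IHe; split => //; exists T; split; last rewrite -E.
  have oiT : occurs i T by rewrite -lvT; apply: lv_occ; rewrite lvT.
  have gvi : gvert F i by apply: IHv; exists T.
  have key : forall w, occurs w p -> w = i \/ (gadj F w i /\ (w < i)%N).
    move=> w ow; case: (eqVneq w i) => [->|nwi]; [by left|right].
    rewrite E in ow.
    have [q [Pq [lvq oq]]] : exists q, P q /\ lv q = i /\ occurs w q.
      by case: (prem_supp ow) => o; [exists p'|exists T].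
    have oiq : occurs i q by rewrite -lvq; apply: lv_occ; rewrite lvq.
    split.
      apply: IHe; split; first by apply/eqP.
      by exists q.
    by rewrite ltn_neqAle nwi /= -lvq; apply: lv_ge.
  case: (key u ou) => [Eu|Hu]; case: (key v ov) => [Ev|Hv].
  + by exfalso; apply: nuv; rewrite Eu Ev.
  + by rewrite Eu; apply: gsym; case: Hv.
  + by rewrite Ev; case: Hu.
  + exact: (Fch i gvi u v (or_intror Hu) (or_intror Hv) nuv).
- move=> P Q i T _ [IHv IHe] _ _ [PT _] _.
  have sub : forall p, right_set P T p -> exists q, P q /\ forall w, occurs w p -> occurs w q.
    move=> p [[Pp _]|[->|->]].
    + by exists p.
    + exists T; split => // w; exact: ini_supp.
    + exists T; split => // w; exact: tail_supp.
  split.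
    move=> v [p [Hp occ]]; have [q [Pq Hq]] := sub p Hp.
    by apply: IHv; exists q; split => //; apply: Hq.
  move=> u v [nuv [p [Hp [ou ov]]]]; have [q [Pq Hq]] := sub p Hp.
  by apply: IHe; split => //; exists q; split => //; split; apply: Hq.
- by [].
Qed.
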